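(* Let $n\ge1$ and, for $i=1,\dots,n$, let $c_i>0$, $m_i>0$, $d_i>0$, and let $a_i,\mu_i,b_i,\delta_i$ satisfy $0\le a_i<\mu_i<b_i$ and $0<\delta_i\le \frac{2(b_i-\mu_i)(\mu_i-a_i)}{b_i-a_i}$. Let $\mathcal{P}_{(\mu,\delta)}$ be the set of probability distributions $\mathbb{P}$ of random vectors $\vec D=(D_1,\dots,D_n)$ such that, for every $i$, $\mathbb{E}_{\mathbb{P}}[D_i]=\mu_i$, $\mathbb{E}_{\mathbb{P}}|D_i-\mu_i|=\delta_i$ and $\operatorname{supp}(D_i)\subseteq[a_i,b_i]$. For $\vec q=(q_1,\dots,q_n)$ let $$G(\vec q,\vec D)=\sum_{i=1}^n c_i\big(d_i(q_i-D_i)+(m_i+d_i)(D_i-q_i)^+\big).$$ Then, for every $\vec q$, the maximum $\max_{\mathbb{P}\in\mathcal{P}_{(\mu,\delta)}}\mathbb{E}_{\mathbb{P}}[G(\vec q,\vec D)]$ is attained by a distribution under which each $D_i$ has the three-point distribution with values $a_i,\mu_i,b_i$ and respective probabilities $$p_1^{(i)}=\frac{\delta_i}{2(\mu_i-a_i)},\quad p_2^{(i)}=1-\frac{\delta_i}{2(\mu_i-a_i)}-\frac{\delta_i}{2(b_i-\mu_i)},\quad p_3^{(i)}=\frac{\delta_i}{2(b_i-\mu_i)}.$$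
   Context: Here $x^+=\max(x,0)$. The parameters $c_i$, $m_i$ and $d_i$ are the purchase cost, mark-up and discount factor of item $i$, so its selling price is $c_i(1+m_i)$ and its salvage value is $c_i(1-d_i)$. *)

(* Defs.v *)
From HB Require Import structures.
From mathcomp Require Import all_boot all_order all_algebra.
From mathcomp Require Import all_classical all_reals all_analysis.
Set Implicit Arguments. Unset Strict Implicit. Unset Printing Implicit Defensive.
Import Order.TTheory GRing.Theory Num.Theory.
Local Open Scope classical_set_scope.
Local Open Scope ring_scope.

Definition Gcost {R : realType} {n : nat} (c m d q x : 'I_n -> R) : R :=
  \sum_(i < n) c i * (d i * (q i - x i) + (m i + d i) * Num.max (x i - q i) 0).

(* The random vector D = (D_1,...,D_n) on the probability space (T, P) has a
   law in P_(mu,delta): each D_i is measurable, E[D_i] = mu_i,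
   E|D_i - mu_i| = delta_i, and D_i in [a_i, b_i] almost surely. *)
Definition in_Pmudelta {R : realType} {n : nat} {dT : measure_display}
  {T : measurableType dT} (a mu b delta : 'I_n -> R)
  (P : probability T R) (D : 'I_n -> T -> R) : Prop :=
  forall i : 'I_n,
    [/\ measurable_fun setT (D i),
        (\int[P]_x (D i x)%:E = (mu i)%:E)%E,
        (\int[P]_x (`|D i x - mu i|)%:E = (delta i)%:E)%E &
        {ae P, forall x, a i <= D i x <= b i}].

Definition three_point {R : realType} {n : nat} {dT : measure_display}
  {T : measurableType dT} (a mu b delta : 'I_n -> R)
  (P : probability T R) (D : 'I_n -> T -> R) : Prop :=
  forall i : 'I_n,
    [/\ P (D i @^-1` [set a i]) = (delta i / (2 * (mu i - a i)))%:E,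
        P (D i @^-1` [set mu i]) =
          (1 - delta i / (2 * (mu i - a i)) - delta i / (2 * (b i - mu i)))%:E &
        P (D i @^-1` [set b i]) = (delta i / (2 * (b i - mu i)))%:E].

Definition exp_cost {R : realType} {n : nat} {dT : measure_display}
  {T : measurableType dT} (c m d q : 'I_n -> R)
  (P : probability T R) (D : 'I_n -> T -> R) : \bar R :=
  (\int[P]_x (Gcost c m d q (fun i => D i x))%:E)%E.

(* Main.v *)
Require Import Defs.
From HB Require Import structures.
From mathcomp Require Import all_boot all_order all_algebra.
From mathcomp Require Import all_classical all_reals all_analysis.
From mathcomp Require Import ring lra.
Import Order.TTheory GRing.Theory Num.Theory.
Import measurable_realfun.
Local Open Scope classical_set_scope.
Local Open Scope ring_scope.
Section pointwise.
Variable R : realType.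
Implicit Types (c m d q a mu b y u v : R).

Definition hq q y : R := Num.max (y - q) 0.
Definition gfun c m d q y : R := c * (d * (q - y) + (m + d) * Num.max (y - q) 0).
Definition Phi c m d q a mu b y : R :=
  c*d*(q-mu) - c*d*(y-mu) + c*(m+d)*(hq q mu
   + (hq q a - hq q mu)/(mu - a)*((`|y-mu| - (y-mu))/2)
   + (hq q b - hq q mu)/(b - mu)*((`|y-mu| + (y-mu))/2)).

Lemma hq_ge q y : y - q <= hq q y /\ 0 <= hq q y.
Proof. rewrite /hq /Num.max; case: ifPn => h; last rewrite -leNgt in h; split; lra. Qed.

Lemma hq_cases q y : hq q y = y - q \/ hq q y = 0.
Proof. rewrite /hq /Num.max; case: ifP => _; [right|left]; done. Qed.

Lemma conv_core q u y v : u <= y -> y <= v ->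
  (v - u) * hq q y <= (v - y) * hq q u + (y - u) * hq q v.
Proof.
move=> uy yv.
have [hu1 hu2] := hq_ge q u; have [hv1 hv2] := hq_ge q v.
have P1 : 0 <= (v - y) * (hq q u - (u - q)) by apply: mulr_ge0; lra.
have P2 : 0 <= (y - u) * (hq q v - (v - q)) by apply: mulr_ge0; lra.
have P3 : 0 <= (v - y) * hq q u by apply: mulr_ge0; lra.
have P4 : 0 <= (y - u) * hq q v by apply: mulr_ge0; lra.
case: (hq_cases q y) => ->.
- nra.
- nra.
Qed.

Lemma g_le_Phi c m d q a mu b y : 0 < c -> 0 < m -> 0 < d ->
  a < mu -> mu < b -> a <= y -> y <= b -> gfun c m d q y <= Phi c m d q a mu b y.
Proof.
move=> hc hm hd amu mub ay yb.
have key : hq q y <= hq q mu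
   + (hq q a - hq q mu)/(mu - a)*((`|y-mu| - (y-mu))/2)
   + (hq q b - hq q mu)/(b - mu)*((`|y-mu| + (y-mu))/2).
  case: (leP y mu) => ymu.
  - rewrite ler0_norm; last lra.
    have -> : (- (y - mu) + (y - mu)) / 2 = 0 by field.
    have -> : (- (y - mu) - (y - mu)) / 2 = mu - y by field.
    rewrite mulr0 addr0.
    have core := @conv_core q a y mu ay ymu.
    set ha := hq q a in core *; set hM := hq q mu in core *; set hy := hq q y in core *.
    set t := (ha - hM) / (mu - a).
    have e : t * (mu - a) = ha - hM by rewrite /t; field; lra.
    rewrite -subr_le0.
    suff: (mu - a) * (hy - (hM + t * (mu - y))) <= 0 by rewrite pmulr_rle0 //; lra.
    have -> : (mu - a) * (hy - (hM + t * (mu - y))) = (mu - a) * hy - (mu - a) * hM - (t * (mu - a)) * (mu - y) by ring.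
    rewrite e. nra.
  - rewrite ger0_norm; last lra.
    have -> : ((y - mu) - (y - mu)) / 2 = 0 by field.
    have -> : ((y - mu) + (y - mu)) / 2 = y - mu by field.
    rewrite mulr0 addr0.
    have core := @conv_core q mu y b (ltW ymu) yb.
    set hb := hq q b in core *; set hM := hq q mu in core *; set hy := hq q y in core *.
    set t := (hb - hM) / (b - mu).
    have e : t * (b - mu) = hb - hM by rewrite /t; field; lra.
    rewrite -subr_le0.
    suff: (b - mu) * (hy - (hM + t * (y - mu))) <= 0 by rewrite pmulr_rle0 //; lra.
    have -> : (b - mu) * (hy - (hM + t * (y - mu))) = (b - mu) * hy - (b - mu) * hM - (t * (b - mu)) * (y - mu) by ring.
    rewrite e. nra.
have hmd : 0 <= c * (m + d) by apply: mulr_ge0; lra.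
have := ler_wpM2l hmd key.
rewrite /gfun /Phi -/(hq q y).
move: (hq q y) => Y.
set B := (X in _ <= _ * X).
move=> HH. have -> : c * (m + d) * B = c * ((m + d) * B) by ring.
lra.
Qed.
Lemma g_eq_Phi c m d q a mu b y : a < mu -> mu < b ->
  [\/ y = a, y = mu | y = b] -> gfun c m d q y = Phi c m d q a mu b y.
Proof.
move=> amu mub [->|->|->]; rewrite /gfun /Phi -/(hq q _).
- rewrite ltr0_norm; last lra.
  field; lra.
- rewrite subrr normr0; field; lra.
- rewrite gtr0_norm; last lra.
  field; lra.
Qed.

Definition Aco c m d q mu : R := c*d*(q-mu) + c*(m+d)*hq q mu.
Definition Bco c m d q a mu b : R :=
  - (c*d) + c*(m+d)*((hq q b - hq q mu)/(b - mu) - (hq q a - hq q mu)/(mu - a))/2.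
Definition Cco c m d q a mu b : R :=
  c*(m+d)*((hq q b - hq q mu)/(b - mu) + (hq q a - hq q mu)/(mu - a))/2.

Lemma PhiE c m d q a mu b y : Phi c m d q a mu b y =
  Aco c m d q mu + Bco c m d q a mu b * (y - mu) + Cco c m d q a mu b * `|y - mu|.
Proof. rewrite /Phi /Aco /Bco /Cco. ring. Qed.

Lemma gE c m d q y : gfun c m d q y =
  c*d*q + (- (c*d) + c*(m+d)/2) * y + c*(m+d)/2 * `|y + (- q)| + (- (c*(m+d)*q/2)).
Proof. rewrite /gfun maxr_absE subr0 addr0. by field. Qed.
End pointwise.
Arguments hq {R}. Arguments gfun {R}. Arguments Phi {R}. Arguments Aco {R}. Arguments Bco {R}. Arguments Cco {R}.
Arguments g_le_Phi {R}. Arguments g_eq_Phi {R}. Arguments PhiE {R}. Arguments gE {R}.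

Section integ.
Context {R : realType} {dT : measure_display} {T : measurableType dT}.
Variable P : probability T R.
Local Open Scope ereal_scope.

Lemma iD (f g : T -> R) : P.-integrable setT (fun x => (f x)%:E) ->
  P.-integrable setT (fun x => (g x)%:E) -> P.-integrable setT (fun x => (f x + g x)%:E).
Proof.
move=> hf hg; apply: (eq_integrable measurableT (fun x => (f x)%:E + (g x)%:E)).
  by move=> x _; rewrite EFinD.
exact: integrableD.
Qed.

Lemma iZ (k : R) (f : T -> R) : P.-integrable setT (fun x => (f x)%:E) ->
  P.-integrable setT (fun x => (k * f x)%:E).
Proof.
move=> hf; apply: (eq_integrable measurableT (fun x => k%:E * (f x)%:E)).
  by move=> x _; rewrite EFinM.
exact: integrableZl.
Qed.

Lemma iC (k : R) : P.-integrable setT (fun x : T => k%:E).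
Proof. exact: (finite_measure_integrable_cst P k measurableT). Qed.

Lemma iN (f : T -> R) : P.-integrable setT (fun x => (f x)%:E) ->
  P.-integrable setT (fun x => (`|f x|)%:E).
Proof. move=> hf; exact: (integrable_norm hf). Qed.

Lemma intD (f g : T -> R) : P.-integrable setT (fun x => (f x)%:E) ->
  P.-integrable setT (fun x => (g x)%:E) ->
  \int[P]_x (f x + g x)%:E = \int[P]_x (f x)%:E + \int[P]_x (g x)%:E.
Proof.
move=> hf hg; under eq_integral do rewrite EFinD.
exact: integralD.
Qed.

Lemma intZ (k : R) (f : T -> R) : P.-integrable setT (fun x => (f x)%:E) ->
  \int[P]_x (k * f x)%:E = k%:E * \int[P]_x (f x)%:E.
Proof.
move=> hf; under eq_integral do rewrite EFinM.
exact: integralZl.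
Qed.

Lemma intC (k : R) : \int[P]_x (k%:E) = k%:E.
Proof. rewrite integral_cst // -[RHS]mule1; congr (_ * _); exact: probability_setT. Qed.

Lemma ae_le_int (f g : T -> \bar R) : P.-integrable setT f -> P.-integrable setT g ->
  {ae P, forall x, f x <= g x} -> \int[P]_x f x <= \int[P]_x g x.
Proof.
move=> hf hg [N [mN PN sub]].
rewrite (negligible_integral mN measurableT hf PN).
rewrite (negligible_integral mN measurableT hg PN).
have mD : measurable (setT `\` N) by exact: measurableD.
apply: le_integral => //.
- exact: (integrableS measurableT mD _ hf).
- exact: (integrableS measurableT mD _ hg).
move=> x; rewrite inE => -[_ nN].
apply: contrapT => hx; apply: nN; apply: sub => /=; exact: hx.
Qed.

End integ.

Section coord.
Context {R : realType} {dT : measure_display} {T : measurableType dT}.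
Variable P : probability T R.
Variables (c m d q a mu b delta : R) (X : T -> R).
Hypothesis mX : measurable_fun setT X.
Hypothesis hE : (\int[P]_x (X x)%:E = mu%:E)%E.
Hypothesis hA : (\int[P]_x (`|X x - mu|)%:E = delta%:E)%E.
Local Open Scope ereal_scope.

Lemma iA : P.-integrable setT (fun x => (`|X x - mu|)%:E).
Proof.
apply/integrableP; split.
  apply/measurable_EFinP; apply: measurableT_comp => //.
  apply: measurable_funD => //.
under eq_integral do rewrite abse_EFin normr_id.
by rewrite hA ltry.
Qed.

Lemma iX : P.-integrable setT (fun x => (X x)%:E).
Proof.
apply: (le_integrable measurableT (g := fun x => (`|X x - mu| + `|mu|)%R%:E)).
- exact/measurable_EFinP.
- move=> x _; rewrite !abse_EFin lee_fin.
  have h0 : (0 <= `|X x - mu| + `|mu|)%R by rewrite addr_ge0.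
  rewrite (ger0_norm h0).
  by have := ler_normD (X x - mu)%R mu; rewrite subrK.
- apply: iD; [exact: iA|exact: iC].
Qed.

Lemma iXm : P.-integrable setT (fun x => (X x - mu)%R%:E).
Proof. exact: (iD P X (fun _ => - mu)%R iX (iC P _)). Qed.

Lemma iPhi (c' m' d' q' a' b' : R) :
  P.-integrable setT (fun x => (Phi c' m' d' q' a' mu b' (X x))%:E).
Proof.
apply: (eq_integrable measurableT (fun x => (Aco c' m' d' q' mu +
   Bco c' m' d' q' a' mu b' * (X x - mu) + Cco c' m' d' q' a' mu b' * `|X x - mu|)%R%:E)).
  by move=> x _; rewrite PhiE.
apply: iD; last exact/iZ/iA.
apply: iD; first exact: iC.
exact/iZ/iXm.
Qed.

Lemma intPhi (c' m' d' q' a' b' : R) :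
  \int[P]_x (Phi c' m' d' q' a' mu b' (X x))%:E =
  (Aco c' m' d' q' mu + Cco c' m' d' q' a' mu b' * delta)%R%:E.
Proof.
under eq_integral do rewrite PhiE.
set A := Aco _ _ _ _ _; set B := Bco _ _ _ _ _ _ _; set C := Cco _ _ _ _ _ _ _.
have i1 : P.-integrable setT (fun x => (A + B * (X x - mu))%R%:E).
  apply: iD; first exact: iC.
  exact/iZ/iXm.
rewrite (intD P (fun x => A + B * (X x - mu))%R (fun x => C * `|X x - mu|)%R) //;
  last exact/iZ/iA.
rewrite (intD P (fun x => A)%R (fun x => B * (X x - mu))%R) //; last first.
  - exact/iZ/iXm.
  - exact: iC.
rewrite intC (intZ _ _ _ iXm) (intZ _ _ _ iA) hA.
rewrite (intD P X (fun _ => - mu)%R iX (iC P _)).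
by rewrite hE intC -EFinD subrr mulr0 addr0.
Qed.

Lemma igX (c' m' d' q' : R) : P.-integrable setT (fun x => (gfun c' m' d' q' (X x))%:E).
Proof.
apply: (eq_integrable measurableT (fun x => (c'*d'*q' + (- (c'*d') + c'*(m'+d')/2) * X x
   + c'*(m'+d')/2 * `|X x + (- q')| + (- (c'*(m'+d')*q'/2)))%R%:E)).
  by move=> x _; rewrite gE.
apply: iD; last exact: iC.
apply: iD; last first.
  apply: iZ; apply: iN; apply: iD; [exact: iX| exact: iC].
apply: iD; first exact: iC.
exact/iZ/iX.
Qed.

Lemma int_le : (0 < c)%R -> (0 < m)%R -> (0 < d)%R -> (a < mu)%R -> (mu < b)%R ->
  {ae P, forall x, (a <= X x <= b)%R} ->
  \int[P]_x (gfun c m d q (X x))%:E <= (Aco c m d q mu + Cco c m d q a mu b * delta)%R%:E.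
Proof.
move=> hc hm hd amu mub hae.
rewrite -intPhi; apply: ae_le_int; [exact: igX|exact: iPhi|].
apply: filterS hae => x /andP[ax xb]; rewrite lee_fin.
exact: g_le_Phi.
Qed.

Lemma int_eq : (a < mu)%R -> (mu < b)%R ->
  P (X @^-1` [set a]) + P (X @^-1` [set mu]) + P (X @^-1` [set b]) = 1 ->
  \int[P]_x (gfun c m d q (X x))%:E = (Aco c m d q mu + Cco c m d q a mu b * delta)%R%:E.
Proof.
move=> amu mub h1.
rewrite -intPhi.
have mpre v : measurable (X @^-1` [set v]).
  by rewrite -[X @^-1` _]setTI; apply: mX => //; exact: measurable_set1.
set S := X @^-1` [set a] `|` X @^-1` [set mu] `|` X @^-1` [set b].
have mS : measurable S by apply: measurableU; [apply: measurableU|]; exact: mpre.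
have PS : P S = 1.
  rewrite measureU //; last 2 first.
  - by apply: measurableU; exact: mpre.
  - apply/seteqP; split => // x [[/= ->|/= ->]] /= h; move: h amu mub; lra.
  rewrite measureU //.
  apply/seteqP; split => // x [/= -> /= h]; move: h amu; lra.
have PSc : P (~` S) = 0 by rewrite probability_setC // PS subee.
apply: ae_eq_integral => //.
- exact: (measurable_int P (igX c m d q)).
- exact: (measurable_int P (iPhi c m d q a b)).
exists (~` S); split => //; first exact: measurableC.
move=> x /= hx; apply: contrapT => /= hS; apply: hx => _.
congr (_%:E); apply: g_eq_Phi => //.
have : S x by exact: contrapT.
by case=> [[->|->]|->]; [apply: Or31|apply: Or32|apply: Or33].
Qed.

End coord.

Definition pA {R : realType} (a mu delta : R) := delta / (2 * (mu - a)).
Definition pB {R : realType} (mu b delta : R) := delta / (2 * (b - mu)).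

Lemma p13_lemma {R : realType} (a mu b delta : R) : a < mu -> mu < b -> 0 < delta ->
  delta <= 2 * (b - mu) * (mu - a) / (b - a) -> pA a mu delta + pB mu b delta <= 1.
Proof.
move=> amu mub hd0; rewrite ler_pdivlMr; last lra.
move=> hd1.
have e : pA a mu delta + pB mu b delta = delta * (b - a) / (2 * (mu - a) * (b - mu)).
  rewrite /pA /pB; field; lra.
rewrite e ler_pdivrMr; last first.
  apply: mulr_gt0; [|lra]; apply: mulr_gt0; lra.
nra.
Qed.

Definition Aset {R : realType} (a mu delta : R) : set R := `[0, pA a mu delta[.
Definition Bset {R : realType} (mu b delta : R) : set R := `]1 - pB mu b delta, 1].
Definition Xf {R : realType} (a mu b delta : R) (x : R) : R :=
  mu + (a - mu) * \1_(Aset a mu delta) x + (b - mu) * \1_(Bset mu b delta) x.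

Lemma pgt0 {R : realType} (u v delta : R) : u < v -> 0 < delta -> 0 < delta / (2 * (v - u)).
Proof. move=> uv hd; apply: divr_gt0; lra. Qed.

Lemma mA {R : realType} (a mu delta : R) : measurable (Aset a mu delta).
Proof. exact: measurable_itv. Qed.
Lemma mB {R : realType} (mu b delta : R) : measurable (Bset mu b delta).
Proof. exact: measurable_itv. Qed.

Lemma AB {R : realType} (a mu b delta : R) x : pA a mu delta + pB mu b delta <= 1 ->
  Aset a mu delta x -> Bset mu b delta x -> False.
Proof.
move=> p13; rewrite /Aset /Bset /= !in_itv /= => /andP[_ h1] /andP[h2 _].
move: p13 h1 h2; generalize (pA a mu delta) (pB mu b delta) => u v; lra.
Qed.

Lemma XfE {R : realType} (a mu b delta : R) x : pA a mu delta + pB mu b delta <= 1 ->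
  [\/ Aset a mu delta x /\ Xf a mu b delta x = a, Bset mu b delta x /\ Xf a mu b delta x = b |
   (~ Aset a mu delta x /\ ~ Bset mu b delta x /\ Xf a mu b delta x = mu)].
Proof.
move=> p13; rewrite /Xf !indicE.
have [xA|xA] := boolP (x \in Aset a mu delta); have [xB|xB] := boolP (x \in Bset mu b delta).
- by exfalso; apply: (@AB R a mu b delta x p13 (set_mem xA) (set_mem xB)).
- apply: Or31; split; first exact: set_mem. rewrite /= mulr1 mulr0 addr0; ring.
- apply: Or32; split; first exact: set_mem. rewrite /= mulr1 mulr0 addr0; ring.
- apply: Or33; split; first by move=> h; move: xA; rewrite (mem_set h).
  split; first by move=> h; move: xB; rewrite (mem_set h).
  rewrite /= !mulr0 !addr0 //.
Qed.

Definition Punif {R : realType} := uniform_prob (@ltr01 R).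

Lemma unifE {R : realType} (U : set R) : measurable U -> U `<=` `[0, 1] ->
  Punif U = lebesgue_measure U.
Proof.
move=> mU sU; rewrite /Punif /uniform_prob integral_uniform_pdf setIidl //.
rewrite (eq_integral (fun _ => 1%:E)); last first.
  move=> x; rewrite inE => /sU; rewrite /= in_itv /= /uniform_pdf => ->.
  by rewrite subr0 invr1.
by rewrite integral_cst // mul1e.
Qed.

Lemma PA {R : realType} (a mu b delta : R) : a < mu -> mu < b -> 0 < delta ->
  pA a mu delta + pB mu b delta <= 1 -> Punif (Aset a mu delta) = (pA a mu delta)%:E.
Proof.
move=> amu mub hd p13.
have h1 := pgt0 _ _ _ amu hd; have h3 := pgt0 _ _ _ mub hd.
rewrite -/(pA a mu delta) in h1; rewrite -/(pB mu b delta) in h3.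
rewrite unifE //; first last.
- move=> x; rewrite /Aset /= !in_itv /= => /andP[x1 x2]; apply/andP; split => //.
  move: p13 h1 h3 x2; generalize (pA a mu delta) (pB mu b delta) => u v; lra.
- exact: mA.
rewrite /Aset lebesgue_measure_itv /= lte_fin h1 /=.
by rewrite -EFinD oppr0 addr0.
Qed.

Lemma PB {R : realType} (a mu b delta : R) : a < mu -> mu < b -> 0 < delta ->
  pA a mu delta + pB mu b delta <= 1 -> Punif (Bset mu b delta) = (pB mu b delta)%:E.
Proof.
move=> amu mub hd p13.
have h1 := pgt0 _ _ _ amu hd; have h3 := pgt0 _ _ _ mub hd.
rewrite -/(pA a mu delta) in h1; rewrite -/(pB mu b delta) in h3.
rewrite unifE //; first last.
- move=> x; rewrite /Bset /= !in_itv /= => /andP[x1 x2]; apply/andP; split => //.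
  move: p13 h1 h3 x1; generalize (pA a mu delta) (pB mu b delta) => u v; lra.
- exact: mB.
rewrite /Bset lebesgue_measure_itv /= lte_fin.
have -> : (1 - pB mu b delta < 1) = true.
  by apply/idP; move: h3; generalize (pB mu b delta) => v; lra.
by rewrite /= -EFinD; congr (_%:E); ring.
Qed.

Section xfprops.
Context {R : realType} (a mu b delta : R).

Lemma Xf_meas : measurable_fun setT (Xf a mu b delta).
Proof.
rewrite /Xf; apply: measurable_funD; first apply: measurable_funD.
- exact: measurable_cst.
- apply: measurable_funM; first exact: measurable_cst.
  exact: (measurable_indic (mA a mu delta)).
- apply: measurable_funM; first exact: measurable_cst.
  exact: (measurable_indic (mB mu b delta)).
Qed.

Lemma Xf_abs (p13 : pA a mu delta + pB mu b delta <= 1) (amu : a < mu) (mub : mu < b) x :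
  `|Xf a mu b delta x - mu| =
  (mu - a) * \1_(Aset a mu delta) x + (b - mu) * \1_(Bset mu b delta) x.
Proof.
case: (XfE a mu b delta x p13) => [[hA ->]|[hB ->]|[hnA [hnB ->]]].
- have hnB : ~ Bset mu b delta x := fun hB => @AB _ a mu b delta x p13 hA hB.
  rewrite !indicE (mem_set hA) (memNset hnB) /= mulr1 mulr0 addr0.
  rewrite ltr0_norm; [ring|lra].
- have hnA : ~ Aset a mu delta x := fun hA => @AB _ a mu b delta x p13 hA hB.
  rewrite !indicE (mem_set hB) (memNset hnA) /= mulr1 mulr0 add0r.
  rewrite gtr0_norm; [ring|lra].
- by rewrite !indicE (memNset hnA) (memNset hnB) /= !mulr0 addr0 subrr normr0.
Qed.

Lemma pre_a (p13 : pA a mu delta + pB mu b delta <= 1) (amu : a < mu) (mub : mu < b) :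
  Xf a mu b delta @^-1` [set a] = Aset a mu delta.
Proof.
apply/seteqP; split => x /=.
- move=> h; case: (XfE a mu b delta x p13) => [[hA _]|[hB e]|[_ [_ e]]] //; exfalso; move: h; rewrite e; lra.
- move=> hA; case: (XfE a mu b delta x p13) => [[_ ->]|[hB _]|[hnA _]] //; exfalso;
  first [exact: (@AB _ a mu b delta x p13 hA hB) | exact: hnA hA].
Qed.

Lemma pre_b (p13 : pA a mu delta + pB mu b delta <= 1) (amu : a < mu) (mub : mu < b) :
  Xf a mu b delta @^-1` [set b] = Bset mu b delta.
Proof.
apply/seteqP; split => x /=.
- move=> h; case: (XfE a mu b delta x p13) => [[hA e]|[hB _]|[_ [_ e]]] //; exfalso; move: h; rewrite e; lra.
- move=> hB; case: (XfE a mu b delta x p13) => [[hA _]|[_ ->]|[_ [hnB _]]] //; exfalso;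
  first [exact: (@AB _ a mu b delta x p13 hA hB) | exact: hnB hB].
Qed.

Lemma pre_mu (p13 : pA a mu delta + pB mu b delta <= 1) (amu : a < mu) (mub : mu < b) :
  Xf a mu b delta @^-1` [set mu] = ~` (Aset a mu delta `|` Bset mu b delta).
Proof.
apply/seteqP; split => x /=.
- move=> h; case: (XfE a mu b delta x p13) => [[hA e]|[hB e]|[hnA [hnB _]]].
  + exfalso; move: h; rewrite e; lra.
  + exfalso; move: h; rewrite e; lra.
  + by case.
- move=> hn; case: (XfE a mu b delta x p13) => [[hA _]|[hB _]|[_ [_ ->]]] //; exfalso; apply: hn;
  first [by left | by right].
Qed.

End xfprops.

Lemma AB0 {R : realType} (a mu b delta : R) : pA a mu delta + pB mu b delta <= 1 ->
  Aset a mu delta `&` Bset mu b delta = set0.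
Proof. move=> p13; apply/seteqP; split => x // [hA hB]; exact: (@AB _ a mu b delta x p13 hA hB). Qed.

Lemma PAB {R : realType} (a mu b delta : R) : a < mu -> mu < b -> 0 < delta ->
  pA a mu delta + pB mu b delta <= 1 ->
  Punif (~` (Aset a mu delta `|` Bset mu b delta)) =
  (1 - pA a mu delta - pB mu b delta)%:E.
Proof.
move=> amu mub hd p13.
have mAB : measurable (Aset a mu delta `|` Bset mu b delta).
  by apply: measurableU; [exact: mA|exact: mB].
transitivity (1 - Punif (Aset a mu delta `|` Bset mu b delta))%E.
  exact: (probability_setC Punif mAB).
have -> : Punif (Aset a mu delta `|` Bset mu b delta) =
  (Punif (Aset a mu delta) + Punif (Bset mu b delta))%E.
  exact: (measureU Punif (mA a mu delta) (mB mu b delta) (AB0 _ _ _ _ p13)).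
rewrite (PA a mu b delta) // (PB a mu b delta) // -EFinD; congr (_%:E); ring.
Qed.

Lemma Xf_int {R : realType} (a mu b delta : R) : a < mu -> mu < b -> 0 < delta ->
  pA a mu delta + pB mu b delta <= 1 ->
  (\int[Punif]_x (Xf a mu b delta x)%:E = mu%:E)%E.
Proof.
move=> amu mub hd p13.
have iIA : Punif.-integrable setT (fun x => (\1_(Aset a mu delta) x)%:E).
  exact: (integrable_indic Punif (mA a mu delta)).
have iIB : Punif.-integrable setT (fun x => (\1_(Bset mu b delta) x)%:E).
  exact: (integrable_indic Punif (mB mu b delta)).
rewrite /Xf.
rewrite (intD Punif (fun x => mu + (a - mu) * \1_(Aset a mu delta) x)
   (fun x => (b - mu) * \1_(Bset mu b delta) x)); last 2 first.
- apply: iD; [exact: iC| exact: iZ].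
- exact: iZ.
rewrite (intD Punif (fun _ => mu) (fun x => (a - mu) * \1_(Aset a mu delta) x)); last 2 first.
- exact: iC.
- exact: iZ.
have IA : (\int[Punif]_x (\1_(Aset a mu delta) x)%:E = Punif (Aset a mu delta))%E.
  by rewrite integral_indic ?setIT //; exact: mA.
have IB : (\int[Punif]_x (\1_(Bset mu b delta) x)%:E = Punif (Bset mu b delta))%E.
  by rewrite integral_indic ?setIT //; exact: mB.
rewrite intC (intZ _ _ _ iIA) (intZ _ _ _ iIB) IA IB.
rewrite (PA a mu b delta) // (PB a mu b delta) // -!EFinM -!EFinD; congr (_%:E).
rewrite /pA /pB; field; lra.
Qed.

Lemma Xf_intabs {R : realType} (a mu b delta : R) : a < mu -> mu < b -> 0 < delta ->
  pA a mu delta + pB mu b delta <= 1 ->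
  (\int[Punif]_x (`|Xf a mu b delta x - mu|)%:E = delta%:E)%E.
Proof.
move=> amu mub hd p13.
have iIA : Punif.-integrable setT (fun x => (\1_(Aset a mu delta) x)%:E).
  exact: (integrable_indic Punif (mA a mu delta)).
have iIB : Punif.-integrable setT (fun x => (\1_(Bset mu b delta) x)%:E).
  exact: (integrable_indic Punif (mB mu b delta)).
under eq_integral do rewrite Xf_abs //.
rewrite (intD Punif (fun x => (mu - a) * \1_(Aset a mu delta) x)
   (fun x => (b - mu) * \1_(Bset mu b delta) x)); last 2 first.
- exact: iZ.
- exact: iZ.
have IA : (\int[Punif]_x (\1_(Aset a mu delta) x)%:E = Punif (Aset a mu delta))%E.
  by rewrite integral_indic ?setIT //; exact: mA.
have IB : (\int[Punif]_x (\1_(Bset mu b delta) x)%:E = Punif (Bset mu b delta))%E.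
  by rewrite integral_indic ?setIT //; exact: mB.
rewrite (intZ _ _ _ iIA) (intZ _ _ _ iIB) IA IB.
rewrite (PA a mu b delta) // (PB a mu b delta) // -!EFinM -!EFinD; congr (_%:E).
rewrite /pA /pB; field; lra.
Qed.

Theorem lemma2 (R : realType) (n : nat) (hn : (1 <= n)%N)
  (c m d a mu b delta : 'I_n -> R)
  (hc : forall i, 0 < c i) (hm : forall i, 0 < m i) (hd : forall i, 0 < d i)
  (ha : forall i, 0 <= a i) (hamu : forall i, a i < mu i)
  (hmub : forall i, mu i < b i)
  (hdelta0 : forall i, 0 < delta i)
  (hdelta1 : forall i,
      delta i <= 2 * (b i - mu i) * (mu i - a i) / (b i - a i))
  (q : 'I_n -> R) :
  (exists (dT : measure_display) (T : measurableType dT)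
          (Ps : probability T R) (Ds : 'I_n -> T -> R),
      in_Pmudelta a mu b delta Ps Ds /\ three_point a mu b delta Ps Ds)
  /\
  (forall (dT : measure_display) (T : measurableType dT)
          (Ps : probability T R) (Ds : 'I_n -> T -> R),
      in_Pmudelta a mu b delta Ps Ds -> three_point a mu b delta Ps Ds ->
      forall (dT' : measure_display) (T' : measurableType dT')
             (P : probability T' R) (D : 'I_n -> T' -> R),
        in_Pmudelta a mu b delta P D ->
        (exp_cost c m d q P D <= exp_cost c m d q Ps Ds)%E).

Proof.
have p13 i := p13_lemma _ _ _ _ (hamu i) (hmub i) (hdelta0 i) (hdelta1 i).
split.
  exists _, _, Punif, (fun i => Xf (a i) (mu i) (b i) (delta i)); split => i.
  - split.
    + exact: Xf_meas.
    + exact: (Xf_int _ _ _ _ (hamu i) (hmub i) (hdelta0 i) (p13 i)).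
    + exact: (Xf_intabs _ _ _ _ (hamu i) (hmub i) (hdelta0 i) (p13 i)).
    + apply: aeW => x.
      have := hamu i; have := hmub i.
      case: (XfE (a i) (mu i) (b i) (delta i) x (p13 i)) => [[_ ->]|[_ ->]|[_ [_ ->]]] /= h1 h2;
        apply/andP; split; lra.
  - split.
    + have := PA _ _ _ _ (hamu i) (hmub i) (hdelta0 i) (p13 i).
      rewrite -(pre_a _ _ _ _ (p13 i) (hamu i) (hmub i)) => h; exact: h.
    + have := PAB _ _ _ _ (hamu i) (hmub i) (hdelta0 i) (p13 i).
      rewrite -(pre_mu _ _ _ _ (p13 i) (hamu i) (hmub i)) => h; exact: h.
    + have := PB _ _ _ _ (hamu i) (hmub i) (hdelta0 i) (p13 i).
      rewrite -(pre_b _ _ _ _ (p13 i) (hamu i) (hmub i)) => h; exact: h.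
move=> dT T Ps Ds hPs h3 dT' T' P D hP.
have sumI : forall (dT0 : measure_display) (T0 : measurableType dT0)
    (P0 : probability T0 R) (D0 : 'I_n -> T0 -> R),
    in_Pmudelta a mu b delta P0 D0 ->
    exp_cost c m d q P0 D0 =
    (\sum_(i < n) \int[P0]_x (gfun (c i) (m i) (d i) (q i) (D0 i x))%:E)%E.
  move=> dT0 T0 P0 D0 hP0; rewrite /exp_cost -integral_sum //; last first.
    by move=> i; case: (hP0 i) => mX hE hA _; exact: (igX P0 (mu i) (delta i) (D0 i) mX hA).
  by apply: eq_integral => x _; rewrite sumEFin.
rewrite (sumI _ _ _ _ hP) (sumI _ _ _ _ hPs).
apply: lee_sum => i _.
case: (hPs i) => mXs hEs hAs _; case: (h3 i) => e1 e2 e3.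
case: (hP i) => mX hE hA hae.
rewrite (int_eq Ps (c i) (m i) (d i) (q i) (a i) (mu i) (b i) (delta i) (Ds i) mXs hEs hAs (hamu i) (hmub i)).
- exact: (int_le P (c i) (m i) (d i) (q i) (a i) (mu i) (b i) (delta i) (D i) mX hE hA (hc i) (hm i) (hd i) (hamu i) (hmub i) hae).
- rewrite e1 e2 e3 -!EFinD; congr (_%:E); ring.
Qed.
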